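(* Under the standing assumptions below, suppose in addition that $\{\pi_i\}_{i\in\mathbb{N}_0}$ is orthogonal with respect to $W^{(\alpha)}_\tau$ on $[-1,1]$ (e.g. a family of exceptional Gegenbauer polynomials), let $m\in\mathbb{N}_0$, $t\in\mathbb{R}$ with $1+t\nu_m>0$. Then for all $i\in\mathbb{N}_0$, $$\nu_{m;i}^{-1}=\nu_i^{-1}+\delta_{im}\,t,$$ i.e. $\nu_{m;i}=\nu_i$ for $i\ne m$ and $\nu_{m;m}=\nu_m/(1+t\nu_m)$.
   Context: For a nonzero function $\tau$ and $\alpha\in\mathbb{R}$, $W^{(\alpha)}_\tau=(1-z^2)^{\alpha-1/2}\tau^{-2}$ and $T^{(\alpha)}_\tau=(1-z^2)\left(D_z^2-2\frac{\tau_z}{\tau}D_z+\frac{\tau_{zz}}{\tau}\right)-(2\alpha+1)zD_z+(2\alpha-1)z\frac{\tau_z}{\tau}$. $T^{(\alpha)}_\tau$ is an exceptional Gegenbauer operator if it has polynomial eigenfunctions $\{\pi_i\}_{i\in\mathbb{N}_0}$ of pairwise distinct degrees, with only finitely many nonnegative integers missing from $\{\deg\pi_i\}$. Standing assumptions: $\alpha\in\mathbb{N}_0+\frac12$; $\tau$ is a polynomial with no zeros on $[-1,1]$ such that $T^{(\alpha)}_\tau$ is an exceptional Gegenbauer operator with eigenpolynomials $T^{(\alpha)}_\tau\pi_i=\lambda_i\pi_i$, the $\lambda_i$ pairwise distinct; $\rho_{ij}(z)=\int_{-1}^z\pi_i\pi_jW^{(\alpha)}_\tau\,du$; $\tau_m(z,t)=\tau(z)(1+t\rho_{mm}(z))$;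 $\pi_{m;i}(z,t)=(1+t\rho_{mm})\pi_i-t\rho_{im}\pi_m$; and it is assumed that all $\rho_{ij}$ are rational functions of $z$ and all $\tau_m,\pi_{m;i}$ are polynomials in $z$. Norms: $\nu_i=\int_{-1}^1\pi_i^2W^{(\alpha)}_\tau\,dz$ and $\nu_{m;i}=\int_{-1}^1\pi_{m;i}^2W^{(\alpha)}_{\tau_m}\,dz$. *)

(* Defs.v *)
From Stdlib Require Import Reals.
From Coquelicot Require Import Coquelicot.
From mathcomp Require Import all_boot all_algebra.
From mathcomp Require Import Rstruct.

Set Implicit Arguments.
Unset Strict Implicit.
Unset Printing Implicit Defensive.

Local Open Scope R_scope.

Definition alpha (k : nat) : R := INR k + / 2.

(* W^{(alpha)}_tau (z) = (1 - z^2)^(alpha - 1/2) tau(z)^(-2), with alpha - 1/2 = k *)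
Definition Wgt (k : nat) (tau : R -> R) (z : R) : R :=
  (1 - z ^ 2) ^ k / (tau z) ^ 2.

(* T^{(alpha)}_tau applied to a polynomial p, evaluated at z (meaningful where tau(z) <> 0) *)
Definition Top (k : nat) (tau p : {poly R}) (z : R) : R :=
  (1 - z ^ 2) * (((p^`(2)).[z])%R - 2 * (((tau^`()).[z])%R / (tau.[z])%R) * ((p^`()).[z])%R
                  + (((tau^`(2)).[z])%R / (tau.[z])%R) * (p.[z])%R)
  - (2 * alpha k + 1) * z * ((p^`()).[z])%R
  + (2 * alpha k - 1) * z * (((tau^`()).[z])%R / (tau.[z])%R) * (p.[z])%R.

(* T^{(alpha)}_tau is an exceptional Gegenbauer operator with eigenpolynomials
   pi_i and eigenvalues lam_i: nonzero polynomial eigenfunctions (identity of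
   rational functions, i.e. wherever tau does not vanish), pairwise distinct
   degrees, only finitely many degrees missing. *)
Definition exc_gegenbauer (k : nat) (tau : {poly R}) (pi : nat -> {poly R})
    (lam : nat -> R) : Prop :=
  (forall i, pi i != 0%R) /\
  (forall i z, (tau.[z])%R <> 0 -> Top k tau (pi i) z = lam i * ((pi i).[z])%R) /\
  injective (fun i => (size (pi i)).-1) /\
  (exists N : nat, forall n : nat, (N <= n)%N -> exists i, (size (pi i)).-1 = n).

Definition rho (k : nat) (tau : {poly R}) (pi : nat -> {poly R}) (i j : nat) (z : R) : R :=
  RInt (fun u => ((pi i).[u])%R * ((pi j).[u])%R * Wgt k (fun x => (tau.[x])%R) u) (-1) z.

Definition taum (k : nat) (tau : {poly R}) (pi : nat -> {poly R}) (m : nat) (t z : R) : R :=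
  (tau.[z])%R * (1 + t * rho k tau pi m m z).

Definition pim (k : nat) (tau : {poly R}) (pi : nat -> {poly R}) (m i : nat) (t z : R) : R :=
  (1 + t * rho k tau pi m m z) * ((pi i).[z])%R - t * rho k tau pi i m z * ((pi m).[z])%R.

Definition nu (k : nat) (tau : {poly R}) (pi : nat -> {poly R}) (i : nat) : R :=
  RInt (fun z => ((pi i).[z])%R ^ 2 * Wgt k (fun x => (tau.[x])%R) z) (-1) 1.

Definition nuT (k : nat) (tau : {poly R}) (pi : nat -> {poly R}) (m : nat) (t : R) (i : nat) : R :=
  RInt (fun z => pim k tau pi m i t z ^ 2 * Wgt k (taum k tau pi m t) z) (-1) 1.

(* Main.v *)
Require Import Defs.
From Stdlib Require Import Reals Lra.
From Coquelicot Require Import Coquelicot.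
From mathcomp Require Import all_boot all_algebra.
From mathcomp Require Import Rstruct.
Import GRing.Theory Num.Theory.
Local Open Scope R_scope.

Lemma cmul (f g : R -> R) x : continuous f x -> continuous g x -> continuous (fun y => f y * g y) x.
Proof. exact: (@continuous_mult R_UniformSpace R_AbsRing f g x). Qed.
Lemma cplus (f g : R -> R) x : continuous f x -> continuous g x -> continuous (fun y => f y + g y) x.
Proof. exact: (@continuous_plus R_UniformSpace R_AbsRing R_NormedModule f g x). Qed.
Lemma cminus (f g : R -> R) x : continuous f x -> continuous g x -> continuous (fun y => f y - g y) x.
Proof. exact: (@continuous_minus R_UniformSpace R_AbsRing R_NormedModule f g x). Qed.
Lemma cconst (c : R) x : continuous (fun _ : R => c) x.
Proof. exact: continuous_const. Qed.
Lemma cid x : continuous (fun y : R => y) x.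
Proof. exact: continuous_id. Qed.
Lemma cpow (f : R -> R) n x : continuous f x -> continuous (fun y => f y ^ n) x.
Proof. move=> H; elim: n => [|n IH] /=; [exact: cconst| exact: cmul]. Qed.
Lemma cdiv (f g : R -> R) x : continuous f x -> continuous g x -> g x <> 0 -> continuous (fun y => f y / g y) x.
Proof. move=> Hf Hg Hx; apply: cmul => //; exact: continuous_Rinv_comp. Qed.

Lemma chorner (p : {poly R}) x : continuous (fun y => p.[y]%R) x.
Proof.
elim/poly_ind: p => [|p c IH].
  apply: (continuous_ext (fun _ => 0)); first by move=> y; rewrite horner0.
  exact: cconst.
apply: (continuous_ext (fun y => p.[y]%R * y + c)).
  by move=> y; rewrite hornerMXaddC.
apply: cplus; [apply: cmul => //; exact: cid | exact: cconst].
Qed.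

Definition clamp z := Rmax (-1) (Rmin 1 z).
Lemma clamp_range z : -1 <= clamp z <= 1.
Proof. rewrite /clamp /Rmax /Rmin; repeat case: Rle_dec; lra. Qed.
Lemma clamp_id z : -1 <= z <= 1 -> clamp z = z.
Proof. rewrite /clamp /Rmax /Rmin; repeat case: Rle_dec; lra. Qed.
Lemma clamp_lip x y : Rabs (clamp x - clamp y) <= Rabs (x - y).
Proof. rewrite /clamp /Rmax /Rmin; repeat case: Rle_dec; split_Rabs; lra. Qed.
Lemma ccl x : continuous clamp x.
Proof.
apply/continuity_pt_filterlim => eps Heps; exists eps; split => // y [_ Hy].
rewrite /R_dist in Hy *; apply: Rle_lt_trans (clamp_lip _ _) Hy.
Qed.
Definition wc k (tau:{poly R}) z := Wgt k (fun x => tau.[x]%R) (clamp z).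
Definition Fc k (tau p q : {poly R}) z := p.[clamp z]%R * q.[clamp z]%R * wc k tau z.

Lemma Fc_cont k (tau p q : {poly R}) x :
  (forall z, -1 <= z <= 1 -> (tau.[z])%R <> 0) -> continuous (Fc k tau p q) x.
Proof.
move=> Ht.
have H := clamp_range x.
apply: (continuous_comp clamp (fun y => p.[y]%R * q.[y]%R * ((1 - y ^ 2) ^ k / (tau.[y]%R) ^ 2))).
  exact: ccl.
apply: cmul; first by apply: cmul; apply: chorner.
apply: cdiv; first by apply: cpow; apply: cminus; [apply: cconst| apply: cpow; apply: cid].
  by apply: cpow; apply: chorner.
by apply: pow_nonzero; apply: Ht.
Qed.

Lemma RI_ex (F : R -> R) a b : (forall y, continuous F y) -> ex_RInt F a b.
Proof. by move=> H; apply: ex_RInt_continuous => z _; apply: H. Qed.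

Lemma RI_deriv (F : R -> R) a x : (forall y, continuous F y) -> is_derive (fun z => RInt F a z) x (F x).
Proof.
move=> H; apply: is_derive_RInt; last exact: H.
by apply: filter_forall => b; apply: RInt_correct; apply: RI_ex.
Qed.

Lemma Fc_ge0 k tau p x : (forall z, -1 <= z <= 1 -> (tau.[z])%R <> 0) -> 0 <= Fc k tau p p x.
Proof.
move=> Ht; rewrite /Fc /wc /Wgt.
have [H1 H2] := clamp_range x.
apply: Rmult_le_pos; first by apply: Rle_0_sqr.
apply: Rmult_le_pos; first by apply: pow_le; nra.
by apply: Rlt_le; apply: Rinv_0_lt_compat; have := Ht _ (conj H1 H2); move: (tau.[clamp x]%R) => u Hu; rewrite /= Rmult_1_r; nra. 
Qed.

Lemma poly_nonroot (p : {poly R}) : p != 0%R -> exists c, -1 < c < 1 /\ p.[c]%R <> 0.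
Proof.
move=> p0.
apply: Classical_Prop.NNPP => Hn.
have Hall : forall c, -1 < c < 1 -> p.[c]%R = 0.
  move=> c Hc; apply: Classical_Prop.NNPP => H; apply: Hn; by exists c.
Local Open Scope ring_scope.
set n := size p.
have n0 : (0 < n)%N by rewrite /n size_poly_gt0.
have nR : (n%:R : R) != 0%R by rewrite pnatr_eq0 -lt0n.
set rs := [seq (j%:R / n%:R : R)%R | j <- iota 0 n].
have := max_poly_roots p0.
move=> /(_ rs) H.
have : (size rs < size p)%N.
  apply: H.
    apply/allP => x /mapP [j]; rewrite mem_iota add0n => /andP [_ jn] ->.
    apply/eqP; apply: Hall.
    have h0 : (0 <= j%:R / n%:R :> R)%R by apply: divr_ge0; apply: ler0n.
    have h1 : (j%:R / n%:R < 1 :> R)%R.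
      by rewrite ltr_pdivrMr ?ltr0n // mul1r ltr_nat.
    move/RleP: h0; move/RltP: h1 => h1 h0.
    split; [apply: (Rlt_le_trans _ 0); [lra|exact h0] | exact h1].
  rewrite map_inj_uniq ?iota_uniq // => i j /(congr1 (fun x : R => (x * n%:R)%R)).
  rewrite !divfK // => /eqP; rewrite eqr_nat => /eqP //.
by rewrite size_map size_iota ltnn.
Qed.
Local Open Scope R_scope.

Definition RR k tau (pi : nat -> {poly R}) i j z := RInt (Fc k tau (pi i) (pi j)) (-1) z.

Lemma Fc_id k tau (p q : {poly R}) x : -1 <= x <= 1 ->
  Fc k tau p q x = p.[x]%R * q.[x]%R * Wgt k (fun y => tau.[y]%R) x.
Proof. by move=> H; rewrite /Fc /wc clamp_id. Qed.

Lemma rho_RR k tau pi i j z : -1 <= z <= 1 -> rho k tau pi i j z = RR k tau pi i j z.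
Proof.
move=> Hz; rewrite /rho /RR; apply: RInt_ext => x.
rewrite Rmin_left ?Rmax_right; try lra.
by move=> Hx; rewrite Fc_id //; lra.
Qed.

Lemma RR_pos k tau pi m : (forall z, -1 <= z <= 1 -> (tau.[z])%R <> 0) -> pi m != 0%R ->
  0 < RR k tau pi m m 1.
Proof.
move=> Ht Hp.
have [c [Hc Hpc]] := @poly_nonroot (pi m) Hp.
set F := Fc k tau (pi m) (pi m).
have Fcont : forall y, continuous F y by move=> y; apply: Fc_cont.
have Fge : forall y, 0 <= F y by move=> y; apply: Fc_ge0.
have Fc0 : 0 < F c.
  rewrite /F Fc_id; last lra.
  rewrite /Wgt.
  have := Ht c ltac:(lra).
  move: (tau.[c]%R) => u Hu.
  have Hw : 0 < (1 - c ^ 2) ^ k by apply: pow_lt; nra.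
  apply: Rmult_lt_0_compat; first by have := Rsqr_pos_lt _ Hpc; rewrite /Rsqr.
  apply: Rmult_lt_0_compat => //; apply: Rinv_0_lt_compat; rewrite /= Rmult_1_r; nra.
have := Fcont c => /continuity_pt_filterlim.
move=> /(_ (F c / 2) ltac:(lra)) [alp [Halp Hcl]].
set d := Rmin alp (Rmin (1 - c) (c + 1)) / 2.
have Hd0 : 0 < d.
  rewrite /d; apply: Rdiv_lt_0_compat; last lra.
  repeat apply: Rmin_glb_lt; lra.
have Hd1 : d < alp /\ d < 1 - c /\ d < c + 1.
  have := Rmin_l alp (Rmin (1 - c) (c + 1)).
  have := Rmin_r alp (Rmin (1 - c) (c + 1)).
  have := Rmin_l (1 - c) (c + 1); have := Rmin_r (1 - c) (c + 1).
  rewrite /d; lra.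
have Fpos : forall y, c - d < y < c + d -> 0 < F y.
  move=> y Hy.
  case: (Req_dec y c) => [->//|Hyc].
  have Hy' : R_dist (F y) (F c) < F c / 2.
    apply: Hcl; split; first by split; [exact I| apply: not_eq_sym].
    change (Rabs (y - c) < alp); case: Hd1 => ? _; split_Rabs; lra.
  move: Hy'; unfold R_dist, Rdist; split_Rabs; lra.
have Emid : 0 < RInt F (c - d) (c + d).
  have := RInt_lt (fun _ => 0) F (c - d) (c + d) ltac:(lra) (fun x _ => Fcont x) (fun x _ => cconst 0 x) Fpos.
  rewrite RInt_const /scal /= /mult /=; lra.
have E1 : RInt F (-1) (c - d) + RInt F (c - d) 1 = RInt F (-1) 1
  by apply: RInt_Chasles; apply: RI_ex.
have E2 : RInt F (c - d) (c + d) + RInt F (c + d) 1 = RInt F (c - d) 1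
  by apply: RInt_Chasles; apply: RI_ex.
have G1 : 0 <= RInt F (-1) (c - d).
  apply: RInt_ge_0; [lra| exact: RI_ex| move=> *; exact: Fge].
have G2 : 0 <= RInt F (c + d) 1.
  apply: RInt_ge_0; [lra| exact: RI_ex| move=> *; exact: Fge].
rewrite /RR -/F; lra.
Qed.

Lemma nuT_formula k tau pi m t i :
  (forall z, -1 <= z <= 1 -> (tau.[z])%R <> 0) ->
  (forall z, -1 <= z <= 1 -> 0 < 1 + t * RR k tau pi m m z) ->
  nuT k tau pi m t i = RR k tau pi i i 1
     - t * (RR k tau pi i m 1 * RR k tau pi i m 1) / (1 + t * RR k tau pi m m 1).
Proof.
move=> Ht Hpos.
have Fcont : forall a b y, continuous (Fc k tau (pi a) (pi b)) y by move=> *; apply: Fc_cont.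
have Rder : forall a b x, is_derive (RR k tau pi a b) x (Fc k tau (pi a) (pi b) x).
  by move=> a b x; apply: RI_deriv.
have Rcont : forall a b x, continuous (RR k tau pi a b) x.
  by move=> a b x; apply: ex_derive_continuous; eexists; apply: Rder.
set Rim := RR k tau pi i m.
set Rmm := RR k tau pi m m.
set Fim := Fc k tau (pi i) (pi m).
set Fmm := Fc k tau (pi m) (pi m).
set Fii := Fc k tau (pi i) (pi i).
set D := fun z => 1 + t * Rmm z.
set H := fun z => t * (Rim z * Rim z) / D z.
set H' := fun x => (t * (Fim x * Rim x + Rim x * Fim x) * D x - t * (Rim x * Rim x) * (0 + t * Fmm x)) / D x ^ 2.
have dD : forall x, is_derive D x (0 + t * Fmm x).
  move=> x; apply: (@is_derive_plus R_AbsRing R_NormedModule (fun _ => 1) (fun z => t * Rmm z)).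
    exact: is_derive_const.
  by apply: is_derive_scal; apply: Rder.
have dH : forall x, -1 <= x <= 1 -> is_derive H x (H' x).
  move=> x Hx; apply: is_derive_div; last by have := Hpos x Hx; rewrite /D /Rmm; lra.
    apply: is_derive_scal.
    apply: (@is_derive_mult R_AbsRing Rim Rim x); try apply: Rder.
    exact: Rmult_comm.
  exact: dD.
have cD : forall x, continuous D x.
  by move=> x; apply: cplus; [apply: cconst| apply: cmul; [apply: cconst| apply: Rcont]].
have cH' : forall x, -1 <= x <= 1 -> continuous H' x.
  move=> x Hx; apply: cdiv.
  - apply: cminus; apply: cmul.
    + apply: cmul; first exact: cconst.
      by apply: cplus; apply: cmul; try apply: Fcont; apply: Rcont.
    + exact: cD.
    + by apply: cmul; [apply: cconst| apply: cmul; apply: Rcont].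
    + by apply: cplus; [apply: cconst| apply: cmul; [apply: cconst| apply: Fcont]].
  - by apply: cpow; apply: cD.
  - by apply: pow_nonzero; have := Hpos x Hx; rewrite /D /Rmm; lra.
have IH' : is_RInt H' (-1) 1 (H 1 - H (-1)).
  apply: (@is_RInt_derive R_CompleteNormedModule H H').
    by move=> x; rewrite Rmin_left ?Rmax_right; try lra; apply: dH.
  by move=> x; rewrite Rmin_left ?Rmax_right; try lra; apply: cH'.
have IF : is_RInt Fii (-1) 1 (RR k tau pi i i 1).
  by rewrite /RR; apply: (@RInt_correct R_CompleteNormedModule); apply: RI_ex => y; apply: Fcont.
have Im := is_RInt_minus _ _ _ _ _ _ IF IH'.
have Hm1 : H (-1) = 0.
  rewrite /H /Rim /RR RInt_point /zero /=; field.
  by have := Hpos (-1) ltac:(lra); rewrite /D /Rmm; lra.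
transitivity (minus (RR k tau pi i i 1) (H 1 - H (-1))); last first.
  rewrite Hm1 /H /D /Rim /Rmm; rewrite Rminus_0_r; by [].
rewrite -(is_RInt_unique _ _ _ _ Im) /nuT.
apply: RInt_ext => x; rewrite Rmin_left ?Rmax_right; try lra.
move=> Hx.
have Hx' : -1 <= x <= 1 by lra.
change (minus (Fii x) (H' x)) with (Fii x - H' x).
rewrite /pim /Wgt /taum /= !rho_RR //.
rewrite /H' /D /Fii /Fim /Fmm /Rim /Rmm !Fc_id // /Wgt.
have := Ht x Hx'; have := Hpos x Hx'; rewrite /Rmm.
move: (tau.[x]%R) (RR k tau pi m m x) (RR k tau pi i m x) ((pi i).[x]%R) ((pi m).[x]%R) ((1 - x ^ 2) ^ k) => u r s a b w Hr Hu.
field; lra.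
Qed.

Lemma nu_RR k tau pi i : nu k tau pi i = RR k tau pi i i 1.
Proof.
rewrite /nu /RR; apply: RInt_ext => x; rewrite Rmin_left ?Rmax_right; try lra.
move=> Hx; rewrite Fc_id /=; [ring | lra].
Qed.

Theorem mainTheorem13 (k : nat) (tau : {poly R}) (pi : nat -> {poly R}) (lam : nat -> R)
  (Htau : forall z, -1 <= z <= 1 -> (tau.[z])%R <> 0)
  (Hexc : exc_gegenbauer k tau pi lam)
  (Hlam : injective lam)
  (Hrho : forall i j : nat, exists P Q : {poly R}, Q != 0%R /\
            forall z, -1 <= z <= 1 -> (Q.[z])%R <> 0 -> rho k tau pi i j z = (P.[z])%R / (Q.[z])%R)
  (Htaum : forall (m : nat) (t : R), exists P : {poly R},
            forall z, -1 <= z <= 1 -> taum k tau pi m t z = (P.[z])%R)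
  (Hpim : forall (m i : nat) (t : R), exists P : {poly R},
            forall z, -1 <= z <= 1 -> pim k tau pi m i t z = (P.[z])%R)
  (Horth : forall i j : nat, i <> j ->
            RInt (fun z => ((pi i).[z])%R * ((pi j).[z])%R * Wgt k (fun x => (tau.[x])%R) z) (-1) 1 = 0)
  (m : nat) (t : R) (Ht : 1 + t * nu k tau pi m > 0) :
  forall i : nat,
    / nuT k tau pi m t i = / nu k tau pi i + (if (i == m)%N then t else 0).
Proof.
move=> i.
have [Hpi _] := Hexc.
have Rnn : forall z, -1 <= z <= 1 -> 0 <= RR k tau pi m m z <= RR k tau pi m m 1.
  move=> z Hz.
  have Fge : forall y, 0 <= Fc k tau (pi m) (pi m) y by move=> y; apply: Fc_ge0.
  have Fcont : forall y, continuous (Fc k tau (pi m) (pi m)) y by move=> y; apply: Fc_cont.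
  have E : RR k tau pi m m z + RInt (Fc k tau (pi m) (pi m)) z 1 = RR k tau pi m m 1
    by apply: RInt_Chasles; apply: RI_ex.
  have G1 : 0 <= RR k tau pi m m z.
    apply: RInt_ge_0; [lra| exact: RI_ex| move=> *; exact: Fge].
  have G2 : 0 <= RInt (Fc k tau (pi m) (pi m)) z 1.
    apply: RInt_ge_0; [lra| exact: RI_ex| move=> *; exact: Fge].
  lra.
rewrite nu_RR in Ht.
have Hpos : forall z, -1 <= z <= 1 -> 0 < 1 + t * RR k tau pi m m z.
  move=> z Hz; have := Rnn z Hz.
  case: (Rle_lt_dec 0 t) => Ht0; nra.
rewrite nuT_formula // !nu_RR.
case: eqP => [->|Him].
  have := @RR_pos k tau pi m Htau (Hpi m).
  move: (RR k tau pi m m 1) Ht => r Ht Hr.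
  field; lra.
have -> : RR k tau pi i m 1 = 0.
  by rewrite -rho_RR; [apply: Horth | lra].
rewrite Rmult_0_l Rmult_0_r /Rdiv Rmult_0_l Rminus_0_r Rplus_0_r //.
Qed.
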